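(* Let $G$ be a connected graph on $n$ vertices with distance matrix $D$. (i) If $G$ is not distance exceptional and $\kappa=D^+(n\vec 1)$, where $D^+$ is the Moore–Penrose inverse of $D$, then $\iota(G)=\dfrac{n}{\vec 1^\top\kappa}\in\mathbb{R}\cup\{\infty\}$ (with $n/0=\infty$). (ii) Let $\lambda_1\le\dots\le\lambda_n$ be the eigenvalues of $D$ with an orthonormal set of corresponding eigenvectors $\vec u_1,\dots,\vec u_n$. Then $$\iota(G)^{-1}=\sum_{i=1}^n\frac{(\vec u_i^\top\vec 1)^2}{\lambda_i}\in\mathbb{R}\cup\{\infty\},$$ interpreted as an extended real expression with the conventions $1/\infty=0$, $1/0=\infty$, $0/0=0$.
   Context: For a connected graph $G$ on vertices $v_1,\dots,v_n$, its distance matrix is $D=(d(v_i,v_j))_{i,j=1}^n$, where $d$ is the shortest-path distance; $\vec 1$ denotes the all-ones vector. $G$ is distance exceptional if $D\vec x=\vec 1$ has no solution. A curvature potential is a vector $\vec x$ with $D\vec x=\vec 1$. Curvature index $\iota(G)\in\mathbb{R}\cup\{\infty\}$: if $G$ is distance exceptional or has a curvature potential $\vec x$ with $\vec 1^\top\vec x\neq0$, then $\iota(G)$ is the unique real number with $\{D\vec x:\vec 1^\top\vec x=1\}\cap\mathbb{R}\vec 1=\{\iota(G)\vec 1\}$ (this intersection is a single point); otherwise (curvature potentials exist and all have $\vec 1^\top\vec x=0$) $\iota(G)=\infty$. *)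

(* Defs.v *)
From HB Require Import structures.
From mathcomp Require Import all_boot all_order all_algebra.
From mathcomp Require Import reals.
Set Implicit Arguments. Unset Strict Implicit. Unset Printing Implicit Defensive.
Import Order.TTheory GRing.Theory Num.Theory.
Local Open Scope ring_scope.

Definition simple_graph (n : nat) (adj : rel 'I_n) : Prop :=
  symmetric adj /\ irreflexive adj.

Definition connected_graph (n : nat) (adj : rel 'I_n) : Prop :=
  forall u v : 'I_n, connect adj u v.

Definition walkb (n : nat) (adj : rel 'I_n) (u v : 'I_n) (k : nat) : bool :=
  [exists p : k.-tuple 'I_n, path adj u p && (last u p == v)].

(* Shortest-path distance: least k < n with a walk of length k from u to v
   (a shortest walk is a shortest path; in a connected graph on n vertices
   it has length < n). Returns n if no such walk exists. *)
Definition gdist (n : nat) (adj : rel 'I_n) (u v : 'I_n) : nat :=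
  find (walkb adj u v) (iota 0 n).

Definition dist_matrix (R : realType) (n : nat) (adj : rel 'I_n) : 'M[R]_n :=
  \matrix_(i, j) (gdist adj i j)%:R.

Definition ones (R : realType) (n : nat) : 'cV[R]_n := const_mx 1.

Definition sumv (R : realType) (n : nat) (x : 'cV[R]_n) : R := \sum_i x i 0.

Definition distance_exceptional (R : realType) (n : nat) (D : 'M[R]_n) : Prop :=
  ~ exists x : 'cV[R]_n, D *m x = ones R n.

(* Values in R ∪ {∞}: Some r = r, None = ∞. *)
(* iota_spec D i  <->  i is the curvature index of (the graph with distance matrix) D,
   exactly following the definition in the paper. *)
Definition iota_spec (R : realType) (n : nat) (D : 'M[R]_n) (i : option R) : Prop :=
  match i with
  | Some r =>
      (distance_exceptional D \/
         exists x : 'cV[R]_n, D *m x = ones R n /\ sumv x != 0) /\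
      (forall c : R, (exists x : 'cV[R]_n, sumv x = 1 /\ D *m x = c *: ones R n)
                     <-> c = r)
  | None =>
      ~ distance_exceptional D /\
      (exists x : 'cV[R]_n, D *m x = ones R n) /\
      (forall x : 'cV[R]_n, D *m x = ones R n -> sumv x = 0)
  end.

Definition is_MP_inverse (R : realType) (n : nat) (A X : 'M[R]_n) : Prop :=
  [/\ A *m X *m A = A, X *m A *m X = X, (A *m X)^T = A *m X & (X *m A)^T = X *m A].

Definition ediv_inf (R : realType) (a b : R) : option R :=
  if b == 0 then None else Some (a / b).

Definition einv (R : realType) (i : option R) : option R :=
  match i with
  | None => Some 0
  | Some r => if r == 0 then None else Some r^-1
  end.

Definition esum_ratio (R : realType) (n : nat) (a b : 'I_n -> R) : option R :=
  if [exists i, (b i == 0) && (a i != 0)] then None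
  else Some (\sum_i a i / b i).

(* Main.v *)
Require Import Defs.
From HB Require Import structures.
From mathcomp Require Import all_boot all_order all_algebra.
From mathcomp Require Import reals.
From mathcomp Require Import ring.
From Stdlib Require Import Classical.
Import Order.TTheory GRing.Theory Num.Theory.
Local Open Scope ring_scope.

Lemma walkb_sym {n : nat} {adj : rel 'I_n} {u v k} :
  symmetric adj -> walkb adj u v k -> walkb adj v u k.
Proof.
move=> hs /existsP [p /andP [hp /eqP hl]].
have hsz : size (rev (belast u p)) == k by rewrite size_rev size_belast size_tuple.
apply/existsP; exists (Tuple hsz) => /=.
move: hp hl; case/lastP: (tval p) => [|q z].
  by move=> _ /= ->; rewrite eqxx.
rewrite -rev_path => hp hl; rewrite hl in hp.
move: hp; rewrite belast_rcons rev_cons last_rcons eqxx andbT.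
apply: sub_path => x y; by rewrite hs.
Qed.

Lemma gdist_sym {n : nat} {adj : rel 'I_n} u v :
  symmetric adj -> gdist adj u v = gdist adj v u.
Proof.
move=> hs; rewrite /gdist; apply: eq_find => k.
by apply/idP/idP; apply: walkb_sym.
Qed.

Definition dotm {R : realType} {n} (u v : 'cV[R]_n) : R := \sum_k u k 0 * v k 0.

Lemma dotm_sym {R : realType} {n} {D : 'M[R]_n} {u v} :
  D^T = D -> dotm u (D *m v) = dotm (D *m u) v.
Proof.
move=> hD.
have hs : forall i j, D i j = D j i by move=> i j; rewrite -{1}hD mxE.
rewrite /dotm.
under eq_bigr do rewrite mxE big_distrr /=.
under [RHS]eq_bigr do rewrite mxE big_distrl /=.
rewrite [RHS]exchange_big /=; apply: eq_bigr => i _; apply: eq_bigr => j _.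
rewrite (hs j i); ring.
Qed.

Lemma dotm_onesr {R : realType} {n} {u : 'cV[R]_n} : dotm u (ones R n) = sumv u.
Proof. by apply: eq_bigr => i _; rewrite mxE mulr1. Qed.
Lemma dotm_onesl {R : realType} {n} {u : 'cV[R]_n} : dotm (ones R n) u = sumv u.
Proof. by apply: eq_bigr => i _; rewrite mxE mul1r. Qed.
Lemma dotmZl {R : realType} {n} {a} {u v : 'cV[R]_n} : dotm (a *: u) v = a * dotm u v.
Proof. rewrite /dotm big_distrr; apply: eq_bigr => i _; by rewrite mxE -mulrA. Qed.
Lemma dotmZr {R : realType} {n} {a} {u v : 'cV[R]_n} : dotm u (a *: v) = a * dotm u v.
Proof. rewrite /dotm big_distrr; apply: eq_bigr => i _; rewrite mxE /=; ring. Qed.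
Lemma sumvZ {R : realType} {n} {a} {u : 'cV[R]_n} : sumv (a *: u) = a * sumv u.
Proof. rewrite /sumv big_distrr; apply: eq_bigr => i _; by rewrite mxE. Qed.

Lemma lemA {R : realType} {n} {D : 'M[R]_n} {x0 : 'cV[R]_n} :
  D^T = D -> D *m x0 = ones R n ->
  (forall x, D *m x = ones R n -> sumv x = sumv x0) /\
  (sumv x0 != 0 -> iota_spec D (Some (sumv x0)^-1)) /\
  (sumv x0 = 0 -> iota_spec D None).
Proof.
move=> hD hx0.
have hpot : forall x, D *m x = ones R n -> sumv x = sumv x0.
  move=> x hx; rewrite -dotm_onesl -hx0 -dotm_sym // hx dotm_onesr //.
split => //; split.
- move=> hs; split; first by right; exists x0.
  move=> c; split.
  + move=> [x [h1 h2]].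
    have : dotm x0 (D *m x) = dotm (D *m x0) x by rewrite dotm_sym.
    rewrite h2 hx0 dotmZr dotm_onesr dotm_onesl h1 => hc.
    by rewrite -[c](mulfK hs) hc mul1r.
  + move=> ->; exists ((sumv x0)^-1 *: x0); split.
      by rewrite sumvZ mulVf.
    by rewrite -scalemxAr hx0.
- move=> hs; split; first by move=> h; apply: h; exists x0.
  split; first by exists x0.
  by move=> x hx; rewrite hpot.
Qed.

Lemma lemB {R : realType} {n} {D : 'M[R]_n} (x : 'cV[R]_n) :
  D *m x = 0 -> sumv x = 1 -> distance_exceptional D -> iota_spec D (Some 0).
Proof.
move=> hx hs hex; split; first by left.
move=> c; split.
- move=> [y [h1 h2]]; case: (eqVneq c 0) => // hc; exfalso; apply: hex.
  by exists (c^-1 *: y); rewrite -scalemxAr h2 scalerA mulVf // scale1r.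
- by move=> ->; exists x; rewrite scale0r.
Qed.

Theorem proposition3p3 (R : realType) (n : nat) (adj : rel 'I_n) :
  simple_graph adj -> connected_graph adj ->
  (* (i) *)
  (forall Dp : 'M[R]_n,
     ~ distance_exceptional (dist_matrix R adj) ->
     is_MP_inverse (dist_matrix R adj) Dp ->
     iota_spec (dist_matrix R adj)
       (ediv_inf n%:R (sumv (Dp *m (n%:R *: ones R n))))) /\
  (* (ii) *)
  (forall (lam : 'I_n -> R) (U : 'M[R]_n),
     (forall i j : 'I_n, (i <= j)%N -> lam i <= lam j) ->
     U^T *m U = 1%:M ->
     (forall i : 'I_n, dist_matrix R adj *m col i U = lam i *: col i U) ->
     exists io : option R,
       iota_spec (dist_matrix R adj) io /\
       einv io = esum_ratio (fun i => (sumv (col i U)) ^+ 2) lam).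
Proof.
move=> [hsym hirr] _.
have hD : (dist_matrix R adj)^T = dist_matrix R adj.
  by apply/matrixP => i j; rewrite !mxE gdist_sym.
set D := dist_matrix R adj in hD *.
split.
- move=> Dp hne [h1 _ _ _].
  have [x0 hx0] : exists x0, D *m x0 = ones R n.
    by apply: NNPP.
  set k := Dp *m (n%:R *: ones R n).
  have hk : D *m k = n%:R *: ones R n.
    by rewrite /k -hx0 !scalemxAr !mulmxA h1.
  case: (eqVneq (n%:R : R) 0) => hn.
  + have hk0 : sumv k = 0.
      by rewrite /k hn scale0r mulmx0 /sumv big1 // => i _; rewrite mxE.
    rewrite hk0 /ediv_inf eqxx.
    have [_ [_ hN]] := lemA hD hx0; apply: hN.
    move/eqP: hn; rewrite pnatr_eq0 => /eqP hn0.
    by rewrite /sumv; move: (x0); rewrite hn0 => y; rewrite big_ord0.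
  + set x1 := (n%:R^-1) *: k.
    have hx1 : D *m x1 = ones R n by rewrite -scalemxAr hk scalerA mulVf // scale1r.
    have hs1 : sumv x1 = n%:R^-1 * sumv k by rewrite sumvZ.
    have [_ [hS hN]] := lemA hD hx1.
    rewrite /ediv_inf; case: eqP => hs.
    * by apply: hN; rewrite hs1 hs mulr0.
    * have hne1 : sumv x1 != 0 by rewrite hs1 mulf_neq0 ?invr_eq0 //; apply/eqP.
      have := hS hne1; rewrite hs1 invfM invrK mulrC //.
- move=> lam U _ hU heig.
  set w := fun i : 'I_n => sumv (col i U).
  case hex: [exists i, (lam i == 0) && ((sumv (col i U)) ^+ 2 != 0)].
  + exists (Some 0); split; last by rewrite /einv eqxx /esum_ratio hex.
    case/existsP: hex => i /andP [/eqP hl hw].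
    have hw' : w i != 0 by move: hw; rewrite sqrf_eq0.
    apply: (@lemB _ _ _ ((w i)^-1 *: col i U)).
    * by rewrite -scalemxAr heig hl scale0r scaler0.
    * by rewrite sumvZ mulVf.
    * move=> [x hx].
      have : dotm (col i U) (D *m x) = dotm (D *m col i U) x by rewrite dotm_sym.
      rewrite hx heig dotm_onesr dotmZl hl mul0r => h0.
      by move: hw'; rewrite /w h0 eqxx.
  + have hz : forall i, lam i = 0 -> w i = 0.
      move=> i hl; apply/eqP; rewrite -sqrf_eq0; apply/negPn/negP => hw.
      by move/negbT/existsPn: hex => /(_ i); rewrite hl eqxx hw.
    set y : 'cV[R]_n := \col_i (w i / lam i).
    have hDU : D *m U = U *m diag_mx (\row_i lam i).
      apply/matrixP => k i.
      have := congr1 (fun M : 'cV[R]_n => M k 0) (heig i).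
      rewrite mul_mx_diag !mxE [in RHS]mulrC => <-.
      by apply: eq_bigr => j _; rewrite !mxE.
    have hdy : diag_mx (\row_i lam i) *m y = U^T *m ones R n.
      apply/matrixP => i j; rewrite mul_diag_mx !mxE.
      have -> : \sum_k U^T i k * ones R n k j = w i.
        by apply: eq_bigr => k _; rewrite !mxE mulr1.
      case: (eqVneq (lam i) 0) => hl.
        by rewrite hl mul0r hz.
      by rewrite mulrCA divff // mulr1.
    have hx0 : D *m (U *m y) = ones R n.
      by rewrite mulmxA hDU -mulmxA hdy mulmxA (mulmx1C hU) mul1mx.
    have hsum : sumv (U *m y) = \sum_i (sumv (col i U)) ^+ 2 / lam i.
      rewrite /sumv; under eq_bigr do rewrite mxE.
      rewrite exchange_big /=; apply: eq_bigr => i _.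
      rewrite [RHS]mulrC expr2 mulrA -big_distrl /= [RHS]mulrC; congr (_ * _).
      - by apply: eq_bigr => k _; rewrite !mxE.
      - by rewrite !mxE mulrC.
    have [_ [hS hN]] := lemA hD hx0.
    case: (eqVneq (sumv (U *m y)) 0) => hs.
    * exists None; split; first exact: hN.
      by rewrite /einv /esum_ratio hex -hsum hs.
    * exists (Some (sumv (U *m y))^-1); split; first exact: hS.
      by rewrite /einv /esum_ratio hex invr_eq0 (negbTE hs) invrK hsum.
Qed.
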